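(* Let $X$, $Y$ be bigraphs and $f,g:X\to Y$ bigraph homomorphisms which are $\times$-homotopic. Then for every bigraph $Z$ the graph homomorphisms $f^*, g^*: Z^Y\to Z^X$, $h\mapsto h\circ f$ and $h\mapsto h\circ g$, are $\times$-homotopic, i.e. they lie in the same connected component of $\mathrm{Hom}(Z^Y,Z^X)$.
   Context: A graph is a set $V$ with a symmetric relation $E\subset V\times V$ (loops allowed). $K_2$ has vertices $0,1$ and edges $(0,1),(1,0)$. A bigraph is a graph $X$ with a graph homomorphism $\varepsilon_X:X\to K_2$; $V_i(X)=\varepsilon_X^{-1}(i)$; bigraph homomorphisms commute with colorings. For bigraphs $X,Y$, $Y^X$ is the graph whose vertices are maps $h:V(X)\to V(Y)$ with $\varepsilon_Y\circ h=\varepsilon_X$, with $h,h'$ adjacent iff $(h(a),h'(a'))\in E(Y)$ for all $(a,a')\in E(X)$. A multi-homomorphism $\eta$ from a graph $T$ to a graph $H$ assigns to each vertex of $T$ a finite nonempty set of vertices of $H$ with $\eta(v)\times\eta(w)\subset E(H)$ whenever $(v,w)\in E(T)$; $\mathrm{Hom}(T,H)$ is the poset of these ordered by pointwise inclusion, a homomorphism $f$ being identified with $v\mapsto\{f(v)\}$. For bigraphs, $\mathrm{Hom}_{/K_2}(X,Y)$ is the subposet of those with $\eta(v)\subset V_i(Y)$ for $v\in V_i(X)$, and bigraph homomorphisms $f,g:X\to Y$ are $\times$-homotopic if they lie in the same connected component of $\mathrm{Hom}_{/K_2}(X,Y)$. *)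

(* Defs.v *)
(* Graphs are arbitrary (possibly infinite) types with a
   symmetric edge relation (loops allowed). *)
From Stdlib Require Import List Relations.

Record graph : Type := Graph {
  V : Type;
  E : V -> V -> Prop;
  E_sym : forall x y, E x y -> E y x }.

Definition is_graph_hom (T H : graph) (f : V T -> V H) : Prop :=
  forall v w, E T v w -> E H (f v) (f w).

(* A bigraph: a graph with a homomorphism to K_2, K_2 having vertex set
   bool (false = 0, true = 1) and edges (0,1),(1,0). *)
Record bigraph : Type := Bigraph {
  bg : graph;
  col : V bg -> bool;
  col_hom : forall x y, E bg x y -> col x <> col y }.

Definition is_bigraph_hom (X Y : bigraph) (f : V (bg X) -> V (bg Y)) : Prop :=
  is_graph_hom (bg X) (bg Y) f /\ forall a, col Y (f a) = col X a.

Definition exp_V (Y X : bigraph) : Type :=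
  { h : V (bg X) -> V (bg Y) | forall a, col Y (h a) = col X a }.

Definition exp_E (Y X : bigraph) (h h' : exp_V Y X) : Prop :=
  forall a a', E (bg X) a a' -> E (bg Y) (proj1_sig h a) (proj1_sig h' a').

Lemma exp_E_sym (Y X : bigraph) (h h' : exp_V Y X) :
  exp_E Y X h h' -> exp_E Y X h' h.
Proof.
  intros H a a' Ha. apply E_sym. apply H. apply E_sym. exact Ha.
Qed.

Definition expg (Y X : bigraph) : graph := Graph (exp_V Y X) (exp_E Y X) (exp_E_sym Y X).

Definition precomp (X Y Z : bigraph) (f : V (bg X) -> V (bg Y))
  (hf : forall a, col Y (f a) = col X a) (h : exp_V Z Y) : exp_V Z X :=
  exist (fun k : V (bg X) -> V (bg Z) => forall a, col Z (k a) = col X a) (fun a => proj1_sig h (f a))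
        (fun a => eq_trans (proj2_sig h (f a)) (hf a)).

(* Multi-homomorphisms T -> H : each vertex gets a finite nonempty set
   of vertices of H (sets represented as predicates). *)
Definition is_multihom (T H : graph) (eta : V T -> V H -> Prop) : Prop :=
  (forall v, exists l : list (V H), forall w, eta v w -> In w l) /\
  (forall v, exists w, eta v w) /\
  (forall v v', E T v v' -> forall w w', eta v w -> eta v' w' -> E H w w').

Definition is_multihom_K2 (X Y : bigraph) (eta : V (bg X) -> V (bg Y) -> Prop) : Prop :=
  is_multihom (bg X) (bg Y) eta /\
  (forall v w, eta v w -> col Y w = col X v).

Definition mh_le (A B : Type) (eta eta' : A -> B -> Prop) : Prop :=
  forall v w, eta v w -> eta' v w.

Definition single (A B : Type) (f : A -> B) : A -> B -> Prop :=
  fun v w => w = f v.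

(* Connected components of a poset P: equivalence classes of the
   reflexive-transitive closure of the comparability relation. *)
Definition Hom_step (T H : graph) (eta eta' : V T -> V H -> Prop) : Prop :=
  is_multihom T H eta /\ is_multihom T H eta' /\
  (mh_le _ _ eta eta' \/ mh_le _ _ eta' eta).

Definition same_comp_Hom (T H : graph) (f g : V T -> V H) : Prop :=
  clos_refl_trans _ (Hom_step T H) (single _ _ f) (single _ _ g).

Definition HomK2_step (X Y : bigraph) (eta eta' : V (bg X) -> V (bg Y) -> Prop) : Prop :=
  is_multihom_K2 X Y eta /\ is_multihom_K2 X Y eta' /\
  (mh_le _ _ eta eta' \/ mh_le _ _ eta' eta).

Definition times_homotopic (X Y : bigraph) (f g : V (bg X) -> V (bg Y)) : Prop :=
  clos_refl_trans _ (HomK2_step X Y) (single _ _ f) (single _ _ g).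

(* Main.v *)
Require Import Defs.
From Stdlib Require Import List Relations ClassicalEpsilon.

Lemma single_mh (T H : graph) (p : V T -> V H) :
  is_graph_hom T H p -> is_multihom T H (single _ _ p).
Proof.
  intros Hp. unfold single. split; [|split].
  - intros v. exists (p v :: nil). intros w ->. left; reflexivity.
  - intros v. exists (p v). reflexivity.
  - intros v v' Hv w w' -> ->. apply Hp; exact Hv.
Qed.

Lemma cross (X Y Z : bigraph) eta (Heta : is_multihom_K2 X Y eta)
  s1 hs1 s2 hs2 (S1 : forall a, eta a (s1 a)) (S2 : forall a, eta a (s2 a))
  (h h' : exp_V Z Y) :
  exp_E Z Y h h' -> exp_E Z X (precomp X Y Z s1 hs1 h) (precomp X Y Z s2 hs2 h').
Proof.
  intros Hh a a' Ha. simpl. apply Hh.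
  destruct Heta as [[_ [_ He]] _]. eapply He; eauto.
Qed.

Lemma key (X Y Z : bigraph) eta (Heta : is_multihom_K2 X Y eta)
  s1 hs1 s2 hs2 (S1 : forall a, eta a (s1 a)) (S2 : forall a, eta a (s2 a)) :
  same_comp_Hom (expg Z Y) (expg Z X) (precomp X Y Z s1 hs1) (precomp X Y Z s2 hs2).
Proof.
  set (p1 := precomp X Y Z s1 hs1). set (p2 := precomp X Y Z s2 hs2).
  set (Psi := fun (h : exp_V Z Y) (k : exp_V Z X) => k = p1 h \/ k = p2 h).
  assert (M1 : is_multihom (expg Z Y) (expg Z X) (single _ _ p1)).
  { apply single_mh. intros h h' Hh. apply (cross X Y Z eta Heta); auto. }
  assert (M2 : is_multihom (expg Z Y) (expg Z X) (single _ _ p2)).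
  { apply single_mh. intros h h' Hh. apply (cross X Y Z eta Heta); auto. }
  assert (MP : is_multihom (expg Z Y) (expg Z X) Psi).
  { split; [|split].
    - intros v. exists (p1 v :: p2 v :: nil). intros w [->| ->]; simpl; auto.
    - intros v. exists (p1 v). left; reflexivity.
    - intros v v' Hv w w' [->| ->] [->| ->]; apply (cross X Y Z eta Heta); auto. }
  unfold same_comp_Hom. apply rt_trans with Psi.
  - apply rt_step. split; [exact M1|split; [exact MP|]]. left.
    intros v w Hw. left. exact Hw.
  - apply rt_step. split; [exact MP|split; [exact M2|]]. right.
    intros v w Hw. right. exact Hw.
Qed.

Theorem lemma3p7 (X Y : bigraph) (f g : V (bg X) -> V (bg Y))
  (hf : is_bigraph_hom X Y f) (hg : is_bigraph_hom X Y g)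
  (hfg : times_homotopic X Y f g) (Z : bigraph) :
  is_graph_hom (expg Z Y) (expg Z X) (precomp X Y Z f (proj2 hf)) /\
  is_graph_hom (expg Z Y) (expg Z X) (precomp X Y Z g (proj2 hg)) /\
  same_comp_Hom (expg Z Y) (expg Z X)
    (precomp X Y Z f (proj2 hf)) (precomp X Y Z g (proj2 hg)).
Proof.
  assert (Msingle : forall p (hp : is_bigraph_hom X Y p), is_multihom_K2 X Y (single _ _ p)).
  { intros p hp. split. apply single_mh. apply (proj1 hp).
    intros v w ->. apply (proj2 hp). }
  split; [|split].
  - intros h h' Hh. apply (cross X Y Z (single _ _ f) (Msingle f hf)); auto; reflexivity.
  - intros h h' Hh. apply (cross X Y Z (single _ _ g) (Msingle g hg)); auto; reflexivity.
  - unfold times_homotopic in hfg. apply clos_rt_rtn1 in hfg.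
    assert (P : forall eta, clos_refl_trans_n1 _ (HomK2_step X Y) (single _ _ f) eta ->
      is_multihom_K2 X Y eta /\
      forall s hs, (forall a, eta a (s a)) ->
        same_comp_Hom (expg Z Y) (expg Z X) (precomp X Y Z f (proj2 hf)) (precomp X Y Z s hs)).
    { intros eta Hp. induction Hp as [|eta1 eta2 Hst Hp [IHm IH]].
      - split. apply Msingle; exact hf.
        intros s hs Hs. apply (key X Y Z (single _ _ f) (Msingle f hf)); auto. reflexivity.
      - destruct Hst as [_ [M2 [Hle|Hle]]].
        + split; [exact M2|]. intros s hs Hs.
          destruct IHm as [[_ [Hne _]] Hc].
          set (s0 := fun a => proj1_sig (constructive_indefinite_description _ (Hne a))).
          assert (S0 : forall a, eta1 a (s0 a)).
          { intros a. unfold s0. apply proj2_sig. }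
          assert (hs0 : forall a, col Y (s0 a) = col X a).
          { intros a. apply Hc. apply S0. }
          unfold same_comp_Hom. apply rt_trans with (single _ _ (precomp X Y Z s0 hs0)).
          * apply IH. exact S0.
          * apply (key X Y Z eta2 M2); auto.
        + split; [exact M2|]. intros s hs Hs. apply IH. intros a. apply Hle. apply Hs. }
    apply (proj2 (P _ hfg)). intros a. reflexivity.
Qed.
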